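(* Let $\mathcal G=G(n;S)$ be an integral circulant graph on $n$ vertices with symbol $S$. Then $\mathcal G$ is bipartite if and only if $n$ is even and $S=\bigcup_{f\in F}G_n(n/f)$ for a set $F$ of divisors of $n$ such that, for some integer $\ell_0$, every element of the set $\{2\ell_0/f : f\in F\}$ is an odd integer.
   Context: For an integer $n$ and a set $S\subseteq\{1,\dots,n-1\}$ such that $s\in S$ if and only if $n-s\in S$, the circulant graph $G(n;S)$ is the undirected graph on vertex set $\mathbb{Z}_n$ in which $i$ and $j$ are adjacent iff $i-j \bmod n\in S$. A graph is integral if all eigenvalues of its adjacency matrix are integers. For a divisor $d$ of $n$, $G_n(d)=\{k : 1\le k\le n-1,\ \gcd(k,n)=d\}$. *)

(* Defs.v *)
From HB Require Import structures.
From mathcomp Require Import all_boot all_order all_algebra all_field.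
Set Implicit Arguments. Unset Strict Implicit. Unset Printing Implicit Defensive.
Import Order.TTheory GRing.Theory Num.Theory.

(* Vertex set Z_n is represented by 'I_n; a symbol S is a set of residues. *)

Definition is_symbol (n : nat) (S : {set 'I_n}) : Prop :=
  (forall s : 'I_n, s \in S -> (0 < val s)%N) /\
  (forall s t : 'I_n, (val s + val t)%N = n -> (s \in S) = (t \in S)).

Definition diffmod (n : nat) (i j : 'I_n) : nat := ((val i + n - val j) %% n)%N.

Definition circ_adj (n : nat) (S : {set 'I_n}) (i j : 'I_n) : bool :=
  [exists s in S, val s == diffmod i j].

Definition circ_adjmx (n : nat) (S : {set 'I_n}) : 'M[algC]_n :=
  \matrix_(i, j) ((circ_adj S i j)%:R)%R.

Definition integral_circ (n : nat) (S : {set 'I_n}) : Prop :=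
  forall a : algC, eigenvalue (circ_adjmx S) a -> a \is a Num.int.

Definition bipartite_circ (n : nat) (S : {set 'I_n}) : Prop :=
  exists c : 'I_n -> bool, forall i j : 'I_n, circ_adj S i j -> c i != c j.

Definition Gn (n d : nat) : {set 'I_n} :=
  [set k : 'I_n | (0 < val k)%N && (gcdn (val k) n == d)].

(* Main.v *)
Require Import Defs.
From HB Require Import structures.
From mathcomp Require Import all_boot all_order all_algebra all_field.
From mathcomp Require Import zify.
Set Implicit Arguments. Unset Strict Implicit. Unset Printing Implicit Defensive.
Import Order.TTheory GRing.Theory Num.Theory.

Lemma diff_lem n a s : 0 < n -> s < n -> ((a + s) %% n + n - a %% n) %% n = s.
Proof.
move=> n0 sn.
have an : a %% n <= n by apply: ltnW; rewrite ltn_pmod.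
rewrite -addnBA // modnDml {1}(divn_eq a n).
have -> : a %/ n * n + a %% n + s + (n - a %% n) = a %/ n * n + (s + n).
  lia.
by rewrite modnMDl modnDr modn_small.
Qed.

Lemma diff_lem' n a s : a < n -> s < n -> ((s + a) %% n + n - a) %% n = s.
Proof.
move=> an sn; have n0 : 0 < n by apply: leq_ltn_trans an.
by rewrite -{2}(modn_small an) [s + a]addnC diff_lem.
Qed.

Section Spec.
Variables (n : nat) (S : {set 'I_n}) (n0 : 0 < n).

Definition ordn (y : nat) : 'I_n := Ordinal (ltn_pmod y n0).

Lemma adjE (i j : 'I_n) (s : 'I_n) : val s = diffmod i j -> circ_adj S i j = (s \in S).
Proof.
move=> hs; rewrite /circ_adj; apply/existsP/idP => [[x /andP[xS /eqP hx]]|sS].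
  by have -> : s = x by apply: val_inj; rewrite /= hs hx.
by exists s; rewrite sS hs eqxx.
Qed.

Lemma adj_ord (a : nat) (s : 'I_n) : circ_adj S (ordn (a + s)) (ordn a) = (s \in S).
Proof. by apply: adjE; rewrite /diffmod /= diff_lem. Qed.

Local Open Scope ring_scope.
Variable z : algC.
Hypothesis zp : (n.-primitive_root z)%R.

Definition lam (j0 : nat) : algC := (\sum_(s in S) z ^+ (s * j0))%R.

Lemma zmod x j0 : (z ^+ ((x %% n) * j0) = z ^+ (x * j0))%R.
Proof. by rewrite !exprM (prim_expr_mod zp). Qed.

Lemma eig_lam j0 : eigenvalue (circ_adjmx S) (lam j0).
Proof.
apply/eigenvalueP; exists (\row_(i < n) z ^+ (i * j0)); last first.
  apply/eqP => /rowP/(_ (Ordinal n0)); rewrite !mxE mul0n expr0 => /eqP.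
  by rewrite oner_eq0.
apply/rowP => j; rewrite !mxE.
have hinj : injective (fun s : 'I_n => ordn (s + j)).
  move=> x y /(congr1 (fun w : 'I_n => diffmod w j)); rewrite /diffmod /=.
  rewrite !diff_lem' // => h; exact: val_inj.
rewrite (reindex_inj hinj) /= /lam mulr_suml big_mkcond /=.
rewrite [RHS]big_mkcond; apply: eq_bigr => s _; rewrite !mxE.
have -> : circ_adj S (ordn (s + j)) j = (s \in S).
  by apply: adjE; rewrite /diffmod /= diff_lem'.
case: (s \in S); rewrite ?mulr1 ?mulr0 //.
by rewrite zmod mulnDl exprD.
Qed.


Lemma geom0 (w : algC) : w ^+ n = 1 -> w != 1 -> \sum_(j < n) w ^+ j = 0.
Proof.
move=> wn w1.
have : (w - 1) * \sum_(j < n) w ^+ j = 0 by rewrite -subrX1 wn subrr.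
by move/eqP; rewrite mulf_eq0 subr_eq0 (negbTE w1) => /eqP.
Qed.

Lemma zneq0 i : z ^+ i != 0.
Proof.
have z0 : z != 0.
  apply/eqP => z0; move: (prim_expr_order zp); rewrite z0 expr0n eqn0Ngt n0 /=.
  by move/eqP; rewrite eq_sym oner_eq0.
by rewrite expf_neq0.
Qed.

Lemma phi (t : 'I_n) : \sum_(j < n) lam j * (z ^+ (t * j))^-1 = n%:R * (t \in S)%:R.
Proof.
rewrite /lam.
transitivity (\sum_(s in S) \sum_(j < n) (z ^+ s / z ^+ t) ^+ j).
  rewrite exchange_big /=; apply: eq_bigr => j _; rewrite mulr_suml.
  by apply: eq_bigr => s _; rewrite exprMn exprVn -!exprM.
have wn (s : 'I_n) : (z ^+ s / z ^+ t) ^+ n = 1.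
  rewrite exprMn exprVn -!exprM mulnC exprM (prim_expr_order zp) expr1n.
  by rewrite mulnC exprM (prim_expr_order zp) expr1n invr1 mulr1.
have w1 (s : 'I_n) : s != t -> z ^+ s / z ^+ t != 1.
  move=> st; apply/eqP => h; move: st; apply/negP; rewrite negbK.
  have : z ^+ s = z ^+ t.
    by rewrite -[LHS](divfK (zneq0 t)) h mul1r.
  move/eqP; rewrite (eq_prim_root_expr zp) !modn_small //.
case tS: (t \in S).
  rewrite (bigD1 t) //= mulfV ?zneq0 // [X in _ + X]big1 ?addr0.
    by rewrite (eq_bigr (fun _ => 1)) ?sumr_const ?card_ord ?mulr1 // => j _; rewrite expr1n.
  by move=> s /andP[_ st]; rewrite geom0 ?w1.
rewrite big1 ?mulr0 // => s sS; rewrite geom0 ?w1 //.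
by apply/eqP => st; rewrite -st sS in tS.
Qed.

Lemma galois (hint : integral_circ S) (s : 'I_n) d m k :
  (d * m = n)%N -> (d %| s)%N -> coprime k m -> (s \in S) = (ordn (s * k) \in S).
Proof.
move=> dm ds ckm.
have [nu hnu] := Qn_aut_exists ckm.
have hz j : nu (z ^+ (s * j)) = z ^+ (ordn (s * k) * j).
  rewrite hnu; last first.
    move/dvdnP: ds => [s' ->]; rewrite -exprM.
    have -> : (s' * d * j * m = n * (s' * j))%N by rewrite -dm; lia.
    by rewrite exprM (prim_expr_order zp) expr1n.
  by rewrite -exprM /= zmod mulnAC.
have hl j : nu (lam j) = lam j.
  by have /hint/intrP[m' ->] := eig_lam j; rewrite rmorph_int.
have := phi s; move/(congr1 nu); rewrite rmorph_sum rmorphM !rmorph_nat.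
under eq_bigr do rewrite rmorphM fmorphV hl hz.
rewrite phi => h.
have nz : (n%:R : algC) != 0 by rewrite pnatr_eq0 -lt0n.
have /eqP := mulfI nz h; rewrite eqr_nat.
by case: (s \in S); case: (_ \in S).
Qed.

End Spec.

Lemma cop_help m x y : m %| 1 + x * y -> coprime x m.
Proof.
move=> h; rewrite /coprime -dvdn1.
have g1 : gcdn x m %| x * y + 1 by rewrite addnC; apply: dvdn_trans (dvdn_gcdr _ _) h.
have g2 : gcdn x m %| x * y by apply: dvdn_mulr; exact: dvdn_gcdl.
by rewrite -(dvdn_addr _ g2).
Qed.

Lemma closure n (S : {set 'I_n}) (n0 : 0 < n) (hint : integral_circ S) (s t : 'I_n) :
  0 < s -> s \in S -> gcdn s n = gcdn t n -> t \in S.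
Proof.
move=> s0 sS hg.
have [z zp] := C_prim_root_exists n0.
set g := gcdn s n in hg.
have g0 : 0 < g by rewrite gcdn_gt0 s0.
have gn : g %| n := dvdn_gcdr s n.
set m := n %/ g.
have dm : g * m = n by rewrite mulnC divnK.
have m0 : 0 < m by move: n0; rewrite -dm muln_gt0 => /andP[].
have [s' hs'] : exists s', val s = g * s'.
  by exists (s %/ g); rewrite mulnC divnK // dvdn_gcdl.
have [t' ht'] : exists t', val t = g * t'.
  by exists (t %/ g); rewrite mulnC divnK // hg dvdn_gcdl.
have cop (u : nat) (v : 'I_n) : val v = g * u -> gcdn v n = g -> coprime u m.
  by move=> hv hgv; rewrite /coprime -(eqn_pmul2l g0) muln1 muln_gcdr -hv dm hgv eqxx.
have cs : coprime s' m by apply: (cop _ s).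
have ct : coprime t' m by apply: (cop _ t) => //; rewrite -hg.
have [a _ ha] := Bezoutl s' m0.
rewrite gcdnC (eqP cs) in ha.
have ca : coprime a m by apply: (cop_help (y := s')).
pose k := a * s' * a * t'.
have ck : coprime k m by rewrite /k !coprimeMl ca cs ct.
suff e : ordn n0 (s * k) = t.
  by rewrite -e -(galois n0 zp hint (d := g) (m := m) (k := k)) // hs' dvdn_mulr.
apply: val_inj => /=.
have hx : (a * s') * (a * s') %% m = 1 %% m.
  have h0 : (1 + a * s') %% m = 0 by apply/eqP.
  have e : (a * s') * (a * s') + (1 + a * s') = (1 + a * s') * (a * s') + 1.
    by rewrite mulnDl mul1n; lia.
  have e1 : ((a * s') * (a * s') + (1 + a * s')) %% m = ((a * s') * (a * s')) %% m.
    by rewrite -modnDmr h0 addn0.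
  have e2 : ((1 + a * s') * (a * s') + 1) %% m = 1 %% m.
    by rewrite -modnDml -modnMml h0 mul0n mod0n add0n.
  by rewrite -e1 e e2.
have -> : val s * k = g * ((a * s') * (a * s') * t').
  by rewrite hs' /k -!mulnA; congr (g * _); rewrite !mulnA; congr (_ * t'); rewrite mulnC !mulnA.
suff : (g * ((a * s') * (a * s') * t')) %% (g * m) = g * t' by rewrite dm -ht'.
rewrite -muln_modr -modnMml hx modnMml mul1n muln_modr dm -ht'.
exact: modn_small (ltn_ord t).
Qed.

Lemma walk n (S : {set 'I_n}) (n0 : 0 < n) (c : 'I_n -> bool)
  (hc : forall i j, circ_adj S i j -> c i != c j) (s : 'I_n) (sS : s \in S) x k :
  c (ordn n0 (x + k * s)) = c (ordn n0 x) (+) odd k.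
Proof.
elim: k => [|k IH]; first by rewrite mul0n addn0 addbF.
have e : x + k.+1 * s = x + k * s + s by rewrite mulSn; lia.
rewrite e; have := hc _ _ (etrans (adj_ord S n0 (x + k * s) s) sS).
rewrite IH /=; case: (c _); case: (c _); case: (odd k) => //.
Qed.

Lemma mod_helper n g s f : g %| s -> f * g = n -> (f * s) %% n = 0.
Proof. by case/dvdnP => q ->; rewrite mulnCA => ->; rewrite modnMl. Qed.

Lemma divdiv n g : 0 < n -> g %| n -> n %/ (n %/ g) = g.
Proof.
move=> n0 gn.
have g0 : 0 < g by case: g gn => //; rewrite dvd0n => /eqP n00; rewrite n00 in n0.
have q0 : 0 < n %/ g by rewrite divn_gt0 // dvdn_leq.
by rewrite -{1}(divnK gn) mulKn.
Qed.

Lemma bigcup_seqnat (T : finType) (F : seq nat) (G : nat -> {set T}) x :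
  x \in \bigcup_(f <- F) G f -> exists2 f, f \in F & x \in G f.
Proof.
elim: F => [|f F IH]; first by rewrite big_nil inE.
rewrite big_cons inE => /orP[h|/IH [f' f'F h]]; first by exists f; rewrite ?inE ?eqxx.
by exists f'; rewrite // inE f'F orbT.
Qed.

Unset Implicit Arguments.

Theorem theorem3 (n : nat) (S : {set 'I_n}) :
  (0 < n)%N -> is_symbol S -> S != set0 -> integral_circ S ->
  bipartite_circ S <->
  (~~ odd n /\
   exists F : seq nat,
     (forall f, f \in F -> f %| n)%N /\
     S = \bigcup_(f <- F) Gn n (n %/ f)%N /\
     exists l0 : int, forall f, f \in F ->
       exists k : int, (2 * l0 = k * (f%:Z))%R /\ odd `|k|%N).
Proof.
move=> n0 hsym Sne hint; split.
- case=> c hc.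
  have walk' := walk n0 hc.
  have [s0 s0S] := set0Pn _ Sne.
  have nev : ~~ odd n.
    apply/negP => on; have := walk' s0 s0S 0 n.
    rewrite (_ : ordn n0 (0 + n * s0) = ordn n0 0) ?on ?addbT; first by case: (c _).
    by apply: val_inj; rewrite /= add0n modnMr mod0n.
  split=> //.
  have gdiv (s : 'I_n) : gcdn s n %| n := dvdn_gcdr _ _.
  have s_pos s : s \in S -> 0 < val s := hsym.1 s.
  have gpos s : s \in S -> 0 < gcdn s n by move=> /s_pos; rewrite gcdn_gt0 => ->.
  have fpos (s : 'I_n) : s \in S -> 0 < n %/ gcdn s n.
    by move=> sS; rewrite divn_gt0 ?gpos // dvdn_leq.
  have fg (s : 'I_n) : n %/ gcdn s n * gcdn s n = n by rewrite divnK.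
  have ndiv (s : 'I_n) : s \in S -> n %/ (n %/ gcdn s n) = gcdn s n.
    by move=> sS; rewrite divdiv.
  pose F := [seq n %/ gcdn (val s) n | s <- enum S].
  exists F.
  have memF f : f \in F -> exists2 s, s \in S & f = n %/ gcdn s n.
    by case/mapP => s; rewrite mem_enum => sS ->; exists s.
  split.
    by move=> f /memF [s _ ->]; apply/dvdnP; exists (gcdn s n); rewrite mulnC fg.
  split.
    apply/setP => t; rewrite big_map big_enum /=; apply/idP/idP.
    + move=> tS; apply/bigcupP; exists t => //.
      by rewrite ndiv // inE s_pos //= eqxx.
    + case/bigcupP => s sS; rewrite ndiv // inE => /andP[t0 /eqP tg].
      exact: (closure n0 hint (s_pos s sS) sS (esym tg)).
  have feven s : s \in S -> ~~ odd (n %/ gcdn s n).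
    move=> sS; apply/negP => hof; have := walk' s sS 0 (n %/ gcdn s n).
    rewrite (_ : ordn n0 (0 + _ * s) = ordn n0 0) ?hof ?addbT; first by case: (c _).
    by apply: val_inj; rewrite /= add0n mod0n (mod_helper (dvdn_gcdl s n) (fg s)).
  have go_val (s : 'I_n) : s \in S -> val (ordn n0 (gcdn s n)) = gcdn s n.
    move=> sS; rewrite /= modn_small //.
    by apply: leq_ltn_trans (ltn_ord s); apply: dvdn_leq (s_pos _ sS) (dvdn_gcdl _ _).
  have goS (s : 'I_n) : s \in S -> ordn n0 (gcdn s n) \in S.
    move=> sS; apply: (closure n0 hint (s_pos s sS) sS).
    by rewrite go_val //; apply/esym/gcdn_idPl.
  have samev s1 s2 : s1 \in S -> s2 \in S -> logn 2 (gcdn s1 n) = logn 2 (gcdn s2 n).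
    move=> s1S s2S.
    set g1 := gcdn s1 n; set g2 := gcdn s2 n.
    have g1p : 0 < g1 by apply: gpos.
    have g2p : 0 < g2 by apply: gpos.
    have g2n : g2 <= n by exact: dvdn_leq n0 (gdiv s2).
    set h := gcdn g1 g2.
    have hp : 0 < h by rewrite gcdn_gt0 g1p.
    set a := g2 %/ h; set b := g1 %/ h.
    have ea : g2 = a * h by rewrite divnK // dvdn_gcdr.
    have eb : g1 = b * h by rewrite divnK // dvdn_gcdl.
    have u2lt : n - g2 < n by rewrite ltn_subrL g2p n0.
    pose u2' := Ordinal u2lt.
    have u2S : u2' \in S.
      rewrite -(hsym.2 (ordn n0 g2) u2'); first exact: goS.
      by rewrite go_val //= subnKC.
    have w1 : c (ordn n0 (a * g1)) = c (ordn n0 0) (+) odd a.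
      rewrite -(walk' _ (goS s1 s1S) 0 a); congr (c _); apply: val_inj; rewrite /=.
      by rewrite add0n modnMmr.
    have w2 := walk' _ u2S (a * g1) b.
    rewrite (_ : ordn n0 (a * g1 + b * u2') = ordn n0 0) in w2; last first.
      apply: val_inj => /=; rewrite mod0n mulnBr addnBA; last by rewrite leq_mul2l g2n orbT.
      by rewrite eb ea mulnCA addnC addnK modnMl.
    rewrite w1 /= in w2.
    have oab : odd a = odd b by move: w2; case: (c _); case: (odd a); case: (odd b).
    have ob : odd b.
      apply/negPn/negP => eb2; move: oab; rewrite (negbTE eb2) => /negbT ea2.
      have : 2 * h %| h.
        by rewrite dvdn_gcd {1}eb ea !(mulnC _ h) !dvdn_pmul2l // !dvdn2 ea2 eb2.
      by move/(dvdn_leq hp); lia.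
    have oa : odd a by rewrite oab.
    have bp : 0 < b by case: (b) ob.
    have ap : 0 < a by case: (a) oa.
    by rewrite eb ea !lognM // (logn_coprime (m := b)) ?coprime2n // (logn_coprime (m := a)) ?coprime2n.
  have samef s1 s2 : s1 \in S -> s2 \in S ->
      logn 2 (n %/ gcdn s1 n) = logn 2 (n %/ gcdn s2 n).
    move=> s1S s2S.
    have e1 := congr1 (logn 2) (fg s1); have e2 := congr1 (logn 2) (fg s2).
    rewrite lognM ?fpos ?gpos // in e1; rewrite lognM ?fpos ?gpos // in e2.
    have := samev _ _ s1S s2S; lia.
  set e := logn 2 (n %/ gcdn s0 n).
  have ep : 0 < e.
    by rewrite logn_gt0 mem_primes /= fpos // dvdn2 feven.
  have [m cm hm] := pfactor_coprime (isT : prime 2) n0.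
  exists (Posz (m * 2 ^ e.-1)) => f /memF [s sS ->].
  have [q cq hq] := pfactor_coprime (isT : prime 2) (fpos s sS).
  rewrite -(samef _ _ s0S sS) -/e in hq.
  have qm : q %| m.
    have : q %| n.
      apply: (@dvdn_trans (n %/ gcdn s n)); first by rewrite hq dvdn_mulr.
      by apply/dvdnP; exists (gcdn s n); rewrite mulnC fg.
    rewrite {1}hm Gauss_dvdl //.
    by apply: coprimeXr; rewrite coprime_sym.
  exists (Posz (m %/ q)); split; last first.
    by move: cm; rewrite coprime2n -{1}(divnK qm) oddM => /andP[].
  have -> : n %/ gcdn s n = q * 2 ^ e by [].
  have E : 2 * (m * 2 ^ e.-1) = m %/ q * (q * 2 ^ e).
    by rewrite [RHS]mulnA divnK // mulnCA -expnS prednK.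
  by rewrite -PoszM -E PoszM.
- case=> _ [F [Fd [SF [l0 hl]]]].
  exists (fun i : 'I_n => odd ((val i * (2 * `|l0|)) %/ n)).
  move=> i j /existsP [s /andP [sS /eqP hs]].
  move: sS; rewrite SF => /bigcup_seqnat [f fF]; rewrite inE => /andP[s0 /eqP sg].
  have [k [hk ok]] := hl f fF.
  set L := 2 * `|l0|.
  have hL : L = `|k| * f.
    by have := congr1 absz hk; rewrite !abszM.
  have fn := Fd f fF.
  have fp : 0 < f by case: f fn {fF hk hL sg hl} => //; rewrite dvd0n => /eqP n00; rewrite n00 in n0.
  set g := n %/ f in sg.
  have gf : g * f = n by rewrite divnK.
  have gp : 0 < g by rewrite divn_gt0 // dvdn_leq.
  have fe : ~~ odd f.
    apply/negP => hf; have := congr1 odd hL; rewrite oddM ok hf /L oddM /=.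
    by [].
  have gs : g %| s by rewrite -sg dvdn_gcdl.
  set u := s %/ g.
  have su : val s = g * u by rewrite mulnC divnK.
  have cu : coprime u f.
    by rewrite /coprime -(eqn_pmul2l gp) muln1 muln_gcdr -su gf sg.
  have ou : odd u.
    apply/negPn/negP => eu; move: cu; rewrite /coprime => /eqP c1.
    have : 2 %| gcdn u f by rewrite dvdn_gcd !dvdn2 eu fe.
    by rewrite c1.
  have sL : val s * L = (u * `|k|) * n by rewrite su hL -gf; lia.
  move: hs; rewrite /diffmod => hs.
  have H1 : val i + n = val j + val s + (val i + n - val j) %/ n * n.
    have := divn_eq (val i + n - val j) n; rewrite -hs.
    move: ((val i + n - val j) %/ n) => Q.
    have := ltn_ord j; lia.
  set q := (val i + n - val j) %/ n in H1.
  have H2 : L * n + val i * L = (u * `|k| + q * L) * n + val j * L.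
    have := congr1 (muln^~ L) H1; rewrite /= !mulnDl sL; lia.
  have := congr1 (divn^~ n) H2; rewrite /= !divnMDl // => H3.
  have oL : odd L = false by rewrite /L oddM.
  rewrite -/L; clearbody L.
  move/(congr1 odd): H3; rewrite !oddD oL oddM ou ok (oddM q L) oL andbF /=.
  by case: (odd _); case: (odd _).
Qed.
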